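(* Let $G=(V,E,p)$ be an influence graph. For every partial realization $\psi$ under full-adoption feedback, $$\sigma(\Gamma(\psi))\le|\Gamma(\psi)|+\sigma(\partial(\psi)).$$ Moreover, if $G$ is an in-arborescence, then $$\sigma(\Gamma(\psi))\le|\Gamma(\psi)|+\mathrm{OPT}_N(G,|{\rm dom}(\psi)|).$$
   Context: IC model: each edge $(u,v)$ has probability $p_{uv}\in[0,1]$; a realization (live-edge graph) $\phi$ contains each edge independently with probability $p_{uv}$, with distribution $\mathcal{P}$. $\Gamma(S,\phi)$ is the set of nodes reachable from $S$ in $\phi$; $\sigma(S)=\mathbb{E}_{\Phi\sim\mathcal{P}}|\Gamma(S,\Phi)|$; $\mathrm{OPT}_N(G,k)=\max_{S\subseteq V,|S|\le k}\sigma(S)$. Full-adoption feedback: selecting $u$ as a seed reveals the status of all out-going edges of every node reachable from $u$ in $\phi$. A partial realization $\psi$ records the seeds selected so far (the set ${\rm dom}(\psi)$) with their feedback; $\Gamma(\psi)$ is the set of nodes reachable from ${\rm dom}(\psi)$ through live edges (determined by $\psi$). The boundary $\partial(\psi)$ is a subset of $\Gamma(\psi)$ of minimum cardinality such that $G$ has no directed edge from $\Gamma(\psi)\setminus\partial(\psi)$ to $V\setminus\Gamma(\psi)$ (ties broken arbitrarily). An in-arborescence is an influence graph whose underlying graph is a directed tree with a root $r$ such that for every node $v$ the unique path between $v$ and $r$ is directed from $v$ to $r$. *)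

(* Defs.v *)
From mathcomp Require Import all_boot all_order all_algebra.
Set Implicit Arguments. Unset Strict Implicit. Unset Printing Implicit Defensive.
Import Order.TTheory GRing.Theory Num.Theory.
Local Open Scope ring_scope.

Section IC.
Variable R : realFieldType.
Variable V : finType.

(* A realization (live-edge graph) is a set of live edges. *)
Definition live_rel (phi : {set V * V}) : rel V := fun x y => (x, y) \in phi.

Definition reach (S : {set V}) (phi : {set V * V}) : {set V} :=
  [set v | [exists s in S, connect (live_rel phi) s v]].

(* Probability of realization phi (phi must be a subset of E) under the
   product distribution: each edge e in E is live independently w.p. p e. *)
Definition prob (E : {set V * V}) (p : V -> V -> R) (phi : {set V * V}) : R :=
  (\prod_(e in phi) p e.1 e.2) * (\prod_(e in E :\: phi) (1 - p e.1 e.2)).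

Definition sigma (E : {set V * V}) (p : V -> V -> R) (S : {set V}) : R :=
  \sum_(phi : {set V * V} | phi \subset E) prob E p phi * #|reach S phi|%:R.

(* OPT_N(G, k) = max_{|S| <= k} sigma(S)  (sigma >= 0, so 0 is a neutral default) *)
Definition OPT_N (E : {set V * V}) (p : V -> V -> R) (k : nat) : R :=
  \big[Num.max/0]_(S : {set V} | (#|S| <= k)%N) sigma E p S.

(* Partial realization under full-adoption feedback, obtained by selecting the
   seed set S = dom(psi) in the true realization phi: it records the status of
   all out-going edges of every node reachable from S in phi. *)
Definition psi_live (S : {set V}) (phi : {set V * V}) : {set V * V} :=
  [set e in phi | e.1 \in reach S phi].

Definition Gamma_psi (S : {set V}) (phi : {set V * V}) : {set V} :=
  reach S (psi_live S phi).

Definition seals (E : {set V * V}) (A B : {set V}) : bool :=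
  [forall u, forall v, ((u, v) \in E) && (u \in A :\: B) ==> (v \in A)].

Definition is_boundary (E : {set V * V}) (A B : {set V}) : Prop :=
  [/\ B \subset A, seals E A B &
      forall B' : {set V}, B' \subset A -> seals E A B' -> (#|B| <= #|B'|)%N].

(* In-arborescence with root r: the underlying undirected graph is a tree
   (a simple graph -- no self-loops, no antiparallel pairs -- which is connected
   with #V - 1 edges), and every node has a directed path to r (hence the unique
   tree path from v to r is directed from v to r). *)
Definition in_arborescence (E : {set V * V}) (r : V) : Prop :=
  [/\ forall v, (v, v) \notin E,
      forall u v, (u, v) \in E -> (v, u) \notin E,
      #|E| = (#|V| - 1)%N &
      forall v, connect (live_rel E) v r].

End IC.

(* Main.v *)
Require Import Defs.
From mathcomp Require Import all_boot all_order all_algebra.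
Import Order.TTheory GRing.Theory Num.Theory.
Local Open Scope ring_scope.
Set Implicit Arguments.
Unset Strict Implicit.

Section Aux.
Variable R : realFieldType.
Variable V : finType.

Lemma seal_reach (E phi : {set V * V}) (A B : {set V}) : phi \subset E -> seals E A B ->
  reach A phi \subset A :|: reach B phi.
Proof.
move=> hphi hs; apply/subsetP => v; rewrite inE => /existsP [a /andP [aA /connectP [q pq ->]]].
elim: q a aA pq => [|y q IH] a aA /= pq; first by rewrite in_setU aA.
move: pq => /andP [ay pq]; case: (boolP (a \in B)) => aB.
  rewrite in_setU; apply/orP; right; rewrite inE; apply/existsP; exists a.
  by rewrite aB; apply/connectP; exists (y :: q) => //=; rewrite ay pq.
apply: IH pq; move/forallP: hs => /(_ a)/forallP/(_ y)/implyP; apply.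
by rewrite (subsetP hphi _ ay) in_setD aB aA.
Qed.

Lemma prob_ge0 (E : {set V * V}) (p : V -> V -> R)
  (hp : forall u v, (u, v) \in E -> 0 <= p u v <= 1) (phi : {set V * V}) :
  phi \subset E -> 0 <= prob E p phi.
Proof.
move=> hphi; apply: mulr_ge0; apply: prodr_ge0 => -[u v] /=.
  by move=> /(subsetP hphi) /hp /andP [].
by rewrite in_setD => /andP [_ /hp /andP [_ h]]; rewrite subr_ge0.
Qed.

End Aux.

Lemma prob_sum1 (R : realFieldType) (V : finType) (E : {set V * V}) (p : V -> V -> R) :
  \sum_(phi : {set V * V} | phi \subset E) prob E p phi = 1.
Proof.
pose F (e : V * V) : R := if e \in E then p e.1 e.2 else 0.
pose G (e : V * V) : R := if e \in E then 1 - p e.1 e.2 else 1.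
have h1 : \prod_e (F e + G e) = 1.
  apply: big1 => e _; rewrite /F /G; case: (e \in E).
  by rewrite addrC subrK. by rewrite add0r.
rewrite -h1.
rewrite (bigA_distr _ _ F G).
apply/esym; rewrite /= (bigID (fun J : {set V * V} => J \subset E)) /=.
rewrite [X in _ + X]big1 ?addr0; last first.
  move=> J /subsetPn [e eJ eE]; rewrite (bigD1 e) //= eJ /F (negbTE eE) mul0r //.
apply: eq_big => // J JE; apply/esym; rewrite /prob [RHS](bigID (fun e => e \in J)) /=.
congr (_ * _).
  by apply: eq_big => // e eJ; rewrite eJ /F (subsetP JE _ eJ).
have h2 : \prod_(i | (i \notin J) && (i \notin E)) (if i \in J then F i else G i) = 1.
  apply: big1 => e /andP [eJ eE]; rewrite (negbTE eJ) /G (negbTE eE) //.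
rewrite [RHS](bigID (fun e => e \in E)) /= h2 mulr1.
apply: eq_big => [e|e]; first by rewrite in_setD.
rewrite in_setD => /andP [eJ eE].
by rewrite (negbTE eJ) /G eE.
Qed.


Lemma sigma_seal (R : realFieldType) (V : finType) (E : {set V * V})
  (p : V -> V -> R)
  (hp : forall u v, (u, v) \in E -> 0 <= p u v <= 1) (A B : {set V}) :
  seals E A B -> sigma E p A <= #|A|%:R + sigma E p B.
Proof.
move=> hs; rewrite /sigma.
have H : forall phi : {set V * V}, phi \subset E -> prob E p phi * #|reach A phi|%:R
   <= #|A|%:R * prob E p phi + prob E p phi * #|reach B phi|%:R.
  move=> phi hphi; rewrite [_ * prob _ _ _]mulrC -mulrDr -natrD.
  apply: ler_wpM2l; first exact: prob_ge0.
  rewrite ler_nat; have h1 := subset_leq_card (seal_reach hphi hs).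
  have h2 : (#|A :|: reach B phi| <= #|A| + #|reach B phi|)%N by rewrite cardsU leq_subr.
  exact: (leq_trans h1 h2).
apply: le_trans (ler_sum _ H) _.
by rewrite big_split /= -mulr_sumr prob_sum1 mulr1.
Qed.

Lemma arb_fun (V : finType) (E : {set V * V}) r : in_arborescence E r ->
  forall u w w', (u, w) \in E -> (u, w') \in E -> w = w'.
Proof.
case=> _ _ hcard hconn.
pose g v := odflt v [pick w | (v, w) \in E].
pose f v := (v, g v).
have fE v : v != r -> f v \in E.
  move=> vr; have /connectP [q pq er] := hconn v.
  case: q pq er => [|y q] /=; first by move=> _ er; rewrite er eqxx in vr.
  case/andP => vy _ _; rewrite /f /g; case: pickP => [w //|/(_ y)].
  by rewrite /live_rel in vy; rewrite vy.
have himg : f @: [set~ r] = E.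
  apply/eqP; rewrite eqEcard; apply/andP; split.
    by apply/subsetP => e /imsetP [v]; rewrite in_setC1 => vr ->; exact: fE.
  by rewrite hcard card_imset ?cardsC1 ?subn1 // => a b [].
move=> u w w'; rewrite -himg => /imsetP [v _ [-> ->]] /imsetP [v' _ [<- ->]].
done.
Qed.

Lemma chain (V : finType) (psi : {set V * V})
  (F : forall x y y', (x, y) \in psi -> (x, y') \in psi -> y = y') s u1 u2 :
  (forall w, (u1, w) \notin psi) -> (forall w, (u2, w) \notin psi) ->
  connect (live_rel psi) s u1 -> connect (live_rel psi) s u2 -> u1 = u2.
Proof.
move=> T1 T2 cu1 cu2; move: T1 T2.
case/connectP: cu1 => q1 p1 ->; case/connectP: cu2 => q2 p2 ->.
elim: q2 s q1 p1 p2 => [|y q2 IH] s q1 p1 p2 T1 T2.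
  case: q1 p1 T1 => [|y1 q1] //= /andP [sy1 _] _.
  by case/negP: (T2 y1); exact: sy1.
move: p2 => /= /andP [sy p2]; case: q1 p1 T1 => [|y1 q1] /= p1 T1.
  by case/negP: (T1 y); exact: sy.
move/andP: p1 => [sy1 p1].
have eyy := F _ _ _ sy sy1; subst y1.
exact: IH p1 p2 T1 T2.
Qed.

Lemma reach_step (V : finType) (S : {set V}) (psi : {set V * V}) u w :
  u \in reach S psi -> (u, w) \in psi -> w \in reach S psi.
Proof.
rewrite !inE => /existsP [s /andP [sS su]] uw; apply/existsP; exists s.
by rewrite sS (connect_trans su) // connect1.
Qed.

Unset Implicit Arguments.

Theorem lemma4 (R : realFieldType) (V : finType) (E : {set V * V})
  (p : V -> V -> R)
  (hp : forall u v, (u, v) \in E -> 0 <= p u v <= 1)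
  (S : {set V}) (phi : {set V * V}) (hphi : phi \subset E) :
  (forall B : {set V}, is_boundary E (Gamma_psi S phi) B ->
     sigma E p (Gamma_psi S phi) <= #|Gamma_psi S phi|%:R + sigma E p B)
  /\
  (forall r : V, in_arborescence E r ->
     sigma E p (Gamma_psi S phi) <= #|Gamma_psi S phi|%:R + OPT_N E p #|S|).
Proof.
split.
  by move=> B [_ hs _]; exact: sigma_seal.
move=> r har.
have hfun := arb_fun har.
have psiE : psi_live S phi \subset E.
  by apply/subsetP => e; rewrite inE => /andP [e1 _]; exact: (subsetP hphi _ e1).
pose B' := [set u in Gamma_psi S phi |
  [exists w, ((u, w) \in E) && (w \notin Gamma_psi S phi)]].
have hs : seals E (Gamma_psi S phi) B'.
  apply/forallP => u; apply/forallP => v; apply/implyP => /andP [uv].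
  rewrite in_setD => /andP [/negP nb uG].
  apply/negPn/negP => vG; apply: nb; rewrite inE uG /=; apply/existsP; exists v.
  by rewrite uv vG.
have term : forall u, u \in B' -> forall w, (u, w) \notin psi_live S phi.
  move=> u; rewrite inE => /andP [uG /existsP [w /andP [uw wG]]] w'.
  apply/negP => uw'.
  have w'G : w' \in Gamma_psi S phi := reach_step uG uw'.
  have eww := hfun _ _ _ uw (subsetP psiE _ uw'); subst w'.
  by rewrite w'G in wG.
have psifun : forall x y y', (x, y) \in psi_live S phi -> (x, y') \in psi_live S phi -> y = y'.
  by move=> x y y' h1 h2; exact: hfun (subsetP psiE _ h1) (subsetP psiE _ h2).
pose h s := odflt s [pick u in B' | connect (live_rel (psi_live S phi)) s u].
have cardB : (#|B'| <= #|S|)%N.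
  apply: leq_trans (leq_imset_card h S).
  apply: subset_leq_card; apply/subsetP => u uB.
  have := uB; rewrite inE => /andP [uG _].
  move: uG; rewrite inE => /existsP [s /andP [sS su]].
  apply/imsetP; exists s => //; rewrite /h; case: pickP => [u' /andP [u'B su'] | /(_ u)].
    by rewrite /=; apply: (chain psifun (term _ uB) (term _ u'B) su su').
  by rewrite uB su.
apply: le_trans (sigma_seal hp hs) _.
rewrite lerD2l /OPT_N.
exact: (le_bigmax_cond _ (P := fun S' : {set V} => (#|S'| <= #|S|)%N) (fun S' => sigma E p S') cardB).
Qed.
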